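(* If there exists a $\mathcal{D}$-snake for a domino tiling system $\mathcal{D}$, then $\mathcal{D}$ is solvable.
   Context: A domino tiling system is $\mathcal{D}=(\mathrm{Col},\mathrm{T},\mathrm{white})$ with $\mathrm{Col}$ a finite set of colours, $\mathrm{T}\subseteq\mathrm{Col}^4$ a set of tiles $(c_l,c_d,c_r,c_u)$ and $\mathrm{white}\in\mathrm{Col}$; throughout, $\mathrm{T}$ contains no tile with more than two white sides. A tile is left-/down-/right-/up-border if $c_l$/$c_d$/$c_r$/$c_u$ equals white. Tiles $t=(c_l,c_d,c_r,c_u)$, $t'=(c'_l,c'_d,c'_r,c'_u)$ are H-compatible if $c_r=c'_l$ and V-compatible if $c_u=c'_d$. $\mathcal{D}$ covers $\mathbb{Z}_n\times\mathbb{Z}_m$ ($n,m$ positive) if there is $\xi:\mathbb{Z}_n\times\mathbb{Z}_m\to\mathrm{T}$ such that for all $(x,y)$ with $\xi(x,y)=(c_l,c_d,c_r,c_u)$: $x=0$ iff $c_l$ is white, $x=n-1$ iff $c_r$ is white, $y=0$ iff $c_d$ is white, $y=m-1$ iff $c_u$ is white; $\xi(x,y),\xi(x+1,y)$ are H-compatible whenever $x+1<n$; $\xi(x,y),\xi(x,y+1)$ are V-compatible whenever $y+1<m$. $\mathcal{D}$ is solvable if it covers some $\mathbb{Z}_n\times\mathbb{Z}_m$. Use a role name $r$, individual names $\mathsf{ld},\mathsf{rd},\mathsf{lu},\mathsf{ru}$ (the named ones) and concept names $C_t$ ($t\in\mathrm{T}$); an element carries $t$ if it lies in $C_t^{\mathcal{I}}$.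 An interpretation $\mathcal{I}$ is a $\mathcal{D}$-snake if: (SPath) there is an $r^+$-path starting at $\mathsf{ld}^{\mathcal{I}}$, later passing $\mathsf{rd}^{\mathcal{I}}$, later $\mathsf{lu}^{\mathcal{I}}$ and ending at $\mathsf{ru}^{\mathcal{I}}$ (at positions $1<i<j<$ last); (SNoLoop) no named element $r^+$-reaches itself; (SUniqTil) every element $r^*$-reachable from $\mathsf{ld}^{\mathcal{I}}$ carries exactly one tile; (SSpecTil) the named elements are exactly the elements $r^*$-reachable from $\mathsf{ld}^{\mathcal{I}}$ carrying a tile with two white sides, and $\mathsf{ld}^{\mathcal{I}}$ carries a left- and down-border tile, $\mathsf{rd}^{\mathcal{I}}$ a right- and down-border tile, $\mathsf{lu}^{\mathcal{I}}$ a left- and up-border tile, $\mathsf{ru}^{\mathcal{I}}$ a right- and up-border tile; (SHori) for every element $d\neq\mathsf{ru}^{\mathcal{I}}$ that is $r^*$-reachable from $\mathsf{ld}^{\mathcal{I}}$ and carries $t=(c_l,c_d,c_r,c_u)$ there is a tile $t'=(c'_l,c'_d,c'_r,c'_u)$ carried by all $r$-successors of $d$ such that (i) $t,t'$ are H-compatible, (ii) if $c_d$ is white then ($c_r$ is not white iff $c'_d$ is white), (iii) if $c_u$ is white then $c'_u$ is white; (SLen) there is a unique positive integer $N$ such that all $r^+$-paths from $\mathsf{ld}^{\mathcal{I}}$ to $\mathsf{rd}^{\mathcal{I}}$ have length $N-1$, and $\mathsf{rd}^{\mathcal{I}}$ is the only element $r^{N-1}$-reachable from $\mathsf{ld}^{\mathcal{I}}$;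 (SVerti) for every element $d$ $r^*$-reachable from $\mathsf{ld}^{\mathcal{I}}$ carrying a tile $t$ that is not up-border, there is a tile $t'$ carried by all elements $r^N$-reachable from $d$ (with $N$ from (SLen)) such that $t,t'$ are V-compatible and $t$ is left-border (resp. right-border) iff $t'$ is. Path length is the number of edges. *)

(* Defs.v *)
From mathcomp Require Import all_boot.
Set Implicit Arguments. Unset Strict Implicit. Unset Printing Implicit Defensive.

Section Domino.
Variable Col : finType.

Definition tile := (Col * Col * Col * Col)%type.
Definition cl (t : tile) : Col := t.1.1.1.
Definition cd (t : tile) : Col := t.1.1.2.
Definition cr (t : tile) : Col := t.1.2.
Definition cu (t : tile) : Col := t.2.

Variable white : Col.

Definition left_border (t : tile) : Prop := cl t = white.
Definition down_border (t : tile) : Prop := cd t = white.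
Definition right_border (t : tile) : Prop := cr t = white.
Definition up_border (t : tile) : Prop := cu t = white.

Definition nwhite (t : tile) : nat :=
  (cl t == white) + (cd t == white) + (cr t == white) + (cu t == white).

Definition at_most_two_white (T : {set tile}) : Prop :=
  forall t, t \in T -> nwhite t <= 2.

Definition H_compat (t t' : tile) : Prop := cr t = cl t'.
Definition V_compat (t t' : tile) : Prop := cu t = cd t'.

Definition covers (T : {set tile}) (n m : nat) : Prop :=
  exists xi : nat -> nat -> tile,
    (forall x y, x < n -> y < m ->
       [/\ xi x y \in T,
           (x = 0 <-> cl (xi x y) = white),
           (x = n.-1 <-> cr (xi x y) = white),
           (y = 0 <-> cd (xi x y) = white) &
           (y = m.-1 <-> cu (xi x y) = white)]) /\
    (forall x y, x.+1 < n -> y < m -> H_compat (xi x y) (xi x.+1 y)) /\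
    (forall x y, x < n -> y.+1 < m -> V_compat (xi x y) (xi x y.+1)).

Definition solvable (T : {set tile}) : Prop :=
  exists n m, 0 < n /\ 0 < m /\ covers T n m.

(* Interpretations: domain D, role r, named individuals, concepts C_t. *)
Variable D : Type.
Variable r : D -> D -> Prop.

Inductive rpow : nat -> D -> D -> Prop :=
| rpow0 a : rpow 0 a a
| rpowS k a b c : r a b -> rpow k b c -> rpow k.+1 a c.

Definition rplus (a b : D) : Prop := exists k, 0 < k /\ rpow k a b.
Definition rstar (a b : D) : Prop := exists k, rpow k a b.

Variables (T : {set tile}) (C : tile -> D -> Prop) (ld rd lu ru : D).

Definition carries (t : tile) (d : D) : Prop := t \in T /\ C t d.

Definition named (d : D) : Prop := d = ld \/ d = rd \/ d = lu \/ d = ru.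

Definition SPath : Prop :=
  exists k1 k2 k3, [/\ 0 < k1, 0 < k2 & 0 < k3] /\
    [/\ rpow k1 ld rd, rpow k2 rd lu & rpow k3 lu ru].

Definition SNoLoop : Prop := forall d, named d -> ~ rplus d d.

Definition SUniqTil : Prop :=
  forall d, rstar ld d -> exists! t, carries t d.

Definition SSpecTil : Prop :=
  (forall d, named d <->
     (rstar ld d /\ exists t, carries t d /\ nwhite t = 2)) /\
  (exists t, carries t ld /\ left_border t /\ down_border t) /\
  (exists t, carries t rd /\ right_border t /\ down_border t) /\
  (exists t, carries t lu /\ left_border t /\ up_border t) /\
  (exists t, carries t ru /\ right_border t /\ up_border t).

Definition SHori : Prop :=
  forall d t, d <> ru -> rstar ld d -> carries t d ->
    exists t', t' \in T /\ (forall e, r d e -> carries t' e) /\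
      [/\ H_compat t t',
          (cd t = white -> (cr t <> white <-> cd t' = white)) &
          (cu t = white -> cu t' = white)].

Definition SLen_prop (N : nat) : Prop :=
  (forall k, 0 < k -> rpow k ld rd -> k = N.-1) /\
  rpow N.-1 ld rd /\ (forall e, rpow N.-1 ld e -> e = rd).

Definition SLen : Prop := exists! N, 0 < N /\ SLen_prop N.

Definition SVerti : Prop :=
  forall N, 0 < N -> SLen_prop N ->
  forall d t, rstar ld d -> carries t d -> ~ up_border t ->
    exists t', t' \in T /\ (forall e, rpow N d e -> carries t' e) /\
      [/\ V_compat t t',
          (left_border t <-> left_border t') &
          (right_border t <-> right_border t')].

Definition snake : Prop :=
  [/\ SPath, SNoLoop, SUniqTil, SSpecTil & SHori] /\ SLen /\ SVerti.

End Domino.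

(* Main.v *)
Require Import Defs.
From mathcomp Require Import all_boot zify.
From Stdlib Require Import ClassicalEpsilon.
Set Implicit Arguments. Unset Strict Implicit. Unset Printing Implicit Defensive.

Section Paths.
Variables (D : Type) (r : D -> D -> Prop).

Lemma rpow_fun k a b : rpow r k a b ->
  exists f : nat -> D, [/\ f 0 = a, f k = b & forall i, i < k -> r (f i) (f i.+1)].
Proof.
elim=> [x|n x y z rxy _ [f [f0 fn fs]]].
  by exists (fun _ => x); split.
exists (fun i => if i is j.+1 then f j else x); split => //.
case=> [|i] /=; first by rewrite f0.
rewrite ltnS => /fs; done.
Qed.

Lemma fun_rpow (f : nat -> D) d i : (forall x, i <= x < i + d -> r (f x) (f x.+1)) ->
  rpow r d (f i) (f (i + d)).
Proof.
elim: d i => [|d IH] i H; first by rewrite addn0; constructor.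
econstructor; first by apply: H; lia.
rewrite -addSnnS; apply: IH => x Hx; apply: H; lia.
Qed.

Lemma cat_fun (f g : nat -> D) k m : f k = g 0 ->
  (forall i, i < k -> r (f i) (f i.+1)) -> (forall i, i < m -> r (g i) (g i.+1)) ->
  exists h : nat -> D, [/\ h 0 = f 0, h k = f k, h (k + m) = g m,
     (forall i, i < k + m -> r (h i) (h i.+1)) & forall i, i <= k -> h i = f i].
Proof.
move=> fg fs gs.
exists (fun i => if i <= k then f i else g (i - k)); split.
- by rewrite leq0n.
- by rewrite leqnn.
- case: leqP => H.
    have -> : m = 0 by lia.
    by rewrite addn0 fg.
  by rewrite addKn.
move=> i Hi; case: (ltngtP i k) => H.
- by apply: fs.
- rewrite subSn; last by lia.
  apply: gs; lia.
- subst i; rewrite subSnn fg; apply: gs; lia.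
- by move=> i ->.
Qed.
End Paths.

Section Main.
Variables (Col : finType) (white : Col) (T : {set tile Col}).
Hypothesis HT : at_most_two_white white T.
Variables (D : Type) (r : D -> D -> Prop) (C : tile Col -> D -> Prop) (ld rd lu ru : D).
Variables (p : nat -> D) (L k1 P N : nat).
Hypotheses (Hstep : forall i, i < L -> r (p i) (p i.+1)) (p0 : p 0 = ld) (pk1 : p k1 = rd)
  (pP : p P = lu) (pL : p L = ru) (k1pos : 0 < k1) (Hk1P : k1 < P) (HPL : P < L).
Hypotheses (Hnoloop : SNoLoop r ld rd lu ru) (Huniq : SUniqTil r T C ld)
  (Hspec : SSpecTil white r T C ld rd lu ru) (Hhori : SHori white r T C ld ru)
  (HN : 0 < N) (Hlen : SLen_prop r ld rd N) (Hverti : SVerti white r T C ld rd).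

Lemma seg i d : i + d <= L -> rpow r d (p i) (p (i + d)).
Proof. move=> H; apply: fun_rpow => x Hx; apply: Hstep; lia. Qed.

Lemma reach i : i <= L -> rstar r ld (p i).
Proof. by move=> H; exists i; rewrite -p0 -{2}(add0n i); apply: seg. Qed.

Definition w4 : tile Col := (white, white, white, white).
Definition tl (i : nat) : tile Col := epsilon (inhabits w4) (fun t => carries T C t (p i)).

Lemma tl_car i : i <= L -> carries T C (tl i) (p i).
Proof.
move=> /reach /Huniq [t [Ht _]]; rewrite /tl.
exact: (epsilon_spec (inhabits w4) (fun t => carries T C t (p i)) (ex_intro _ t Ht)).
Qed.

Lemma tl_uniq i t : i <= L -> carries T C t (p i) -> t = tl i.
Proof.
move=> H Ht; have := tl_car H; case: (Huniq (reach H)) => t0 [_ U].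
by move=> Hc; rewrite -(U _ Ht) -(U _ Hc).
Qed.

Lemma tl_T i : i <= L -> tl i \in T.
Proof. by case/tl_car. Qed.

Lemma nw_le i : i <= L -> nwhite white (tl i) <= 2.
Proof. by move=> /tl_T /HT. Qed.

Lemma noloop i d : 0 < d -> i + d <= L -> p (i + d) = p i -> named ld rd lu ru (p i) -> False.
Proof.
move=> Hd H E Hn; apply: (Hnoloop Hn); exists d; split => //.
by rewrite -{2}E; apply: seg.
Qed.

Lemma not_ru i : i < L -> p i <> ru.
Proof.
move=> H E; apply: (@noloop i (L - i)); first lia; first lia.
  by rewrite subnKC ?pL ?E //; lia.
by rewrite E; do 3 right.
Qed.

Lemma named2 i : i <= L -> nwhite white (tl i) = 2 -> named ld rd lu ru (p i).
Proof.
move=> H H2; apply/(proj1 Hspec); split; first exact: reach.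
by exists (tl i); split => //; apply: tl_car.
Qed.

Lemma hori i : i < L -> [/\ H_compat (tl i) (tl i.+1),
          (cd (tl i) = white -> (cr (tl i) <> white <-> cd (tl i.+1) = white)) &
          (cu (tl i) = white -> cu (tl i.+1) = white)].
Proof.
move=> H.
have [t' [_ [Ht' HH]]] := Hhori (not_ru H) (reach (ltnW H)) (tl_car (ltnW H)).
by rewrite -(tl_uniq H (Ht' _ (Hstep H))).
Qed.

Lemma verti i : i + N <= L -> cu (tl i) <> white ->
  [/\ V_compat (tl i) (tl (i + N)),
      (left_border white (tl i) <-> left_border white (tl (i + N))) &
      (right_border white (tl i) <-> right_border white (tl (i + N)))].
Proof.
move=> H Hu.
have Hi : i <= L by lia.
have [t' [_ [Ht' HH]]] := Hverti HN Hlen (reach Hi) (tl_car Hi) Hu.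
by rewrite -(tl_uniq H (Ht' _ (seg H))).
Qed.


Ltac nwsolve H :=
  move: H; rewrite /nwhite;
  repeat (match goal with E : ?x = white |- _ => rewrite E; clear E end);
  rewrite ?eqxx; do 4?(case: (_ == _)); done.

Lemma tl_named i : i <= L ->
  [/\ (p i = ld -> cl (tl i) = white /\ cd (tl i) = white),
      (p i = rd -> cr (tl i) = white /\ cd (tl i) = white),
      (p i = lu -> cl (tl i) = white /\ cu (tl i) = white) &
      (p i = ru -> cr (tl i) = white /\ cu (tl i) = white)].
Proof.
move=> H.
case: Hspec => _ [[a [Ha Ba]] [[b [Hb Bb]] [[c [Hc Bc]] [d [Hd Bd]]]]].
split=> E.
- by have := @tl_uniq i a H; rewrite E => /(_ Ha) <-.
- by have := @tl_uniq i b H; rewrite E => /(_ Hb) <-.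
- by have := @tl_uniq i c H; rewrite E => /(_ Hc) <-.
- by have := @tl_uniq i d H; rewrite E => /(_ Hd) <-.
Qed.

Lemma named_cases i : i <= L -> named ld rd lu ru (p i) ->
  [\/ p i = ld /\ (cl (tl i) = white /\ cd (tl i) = white),
      p i = rd /\ (cr (tl i) = white /\ cd (tl i) = white),
      p i = lu /\ (cl (tl i) = white /\ cu (tl i) = white) |
      p i = ru /\ (cr (tl i) = white /\ cu (tl i) = white)].
Proof.
move=> H Hn; have [A B C' D'] := tl_named H.
case: Hn => [E|[E|[E|E]]].
- by constructor 1; split => //; apply: A.
- by constructor 2; split => //; apply: B.
- by constructor 3; split => //; apply: C'.
- by constructor 4; split => //; apply: D'.
Qed.

Lemma row0 x : x < N -> [/\ cd (tl x) = white, (cl (tl x) = white <-> x = 0) &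
   (cr (tl x) = white <-> x = N.-1)].
Proof.
have k1L : k1 <= L by lia.
have Ex : exists j, (j <= L) && (cr (tl j) == white).
  exists k1; rewrite k1L /=; apply/eqP; by case: (tl_named k1L) => _ /(_ pk1) [].
have [j /andP[jL /eqP jr] jmin] := ex_minnP Ex.
have t0 : cl (tl 0) = white /\ cd (tl 0) = white.
  by case: (tl_named (leq0n L)) => /(_ p0).
have nr : forall x, x < j -> cr (tl x) <> white.
  move=> z Hz E; have := jmin z; rewrite E eqxx andbT.
  have -> : z <= L by lia.
  move=> /(_ isT); lia.
have dn : forall x, x <= j -> cd (tl x) = white.
  elim=> [|z IH] Hz; first by case: t0.
  have [_ Hd _] := hori (leq_trans Hz jL).
  apply/(Hd (IH ltac:(lia))); apply: nr; lia.
have j0 : 0 < j.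
  case: j jL jr jmin nr dn => // _ jr _ _ _; move: (nw_le (leq0n L)) => Hle.
  by case: t0 => A B; nwsolve Hle.
have pj : p j = rd.
  have Hle := nw_le jL.
  have dj := dn j (leqnn j).
  have := named2 jL.
  have -> : nwhite white (tl j) = 2 by move: Hle; rewrite /nwhite jr dj eqxx; case: (_ == _); case: (_ == _).
  move=> /(_ erefl) /(named_cases jL) [] [E [A B]] //.
  - by nwsolve Hle.
  - by nwsolve Hle.
  - by nwsolve Hle.
have jN : j = N.-1.
  apply: (proj1 Hlen) => //; rewrite -p0 -pj -{2}(add0n j); exact: seg.
move=> xN; split.
- apply: dn; lia.
- split; last by move=> ->; case: t0.
  case: x xN => // x xN E; have [Hc _ _] := hori (ltac:(lia) : x < L).
  have := nr x ltac:(lia); rewrite /H_compat in Hc; by rewrite Hc E.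
- split; last by move=> ->; rewrite -jN.
  move=> E; have := jmin x; rewrite E eqxx andbT.
  have -> : x <= L by lia.
  move=> /(_ isT); lia.
Qed.

Lemma borders i0 (Hi0 : forall i, i < i0 -> cu (tl i) <> white) y x :
  x < N -> y * N + x <= L -> y * N + x < i0 + N ->
  (cl (tl (y * N + x)) = white <-> x = 0) /\ (cr (tl (y * N + x)) = white <-> x = N.-1).
Proof.
move=> xN; elim: y => [|y IH] H1 H2.
  by rewrite mul0n add0n; case: (row0 xN).
have E : y.+1 * N + x = (y * N + x) + N by rewrite mulSn; lia.
rewrite E in H1 H2 *.
have [_ Hl Hr] := verti H1 (Hi0 (y * N + x) ltac:(lia)).
have [A B] := IH ltac:(lia) ltac:(lia).
rewrite /left_border /right_border in Hl Hr.
by rewrite -Hl -Hr.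
Qed.


Lemma cover_main : solvable white T.
Proof.
have Ex : exists i, (i <= L) && (cu (tl i) == white).
  exists L; rewrite leqnn /=; apply/eqP.
  by case: (tl_named (leqnn L)) => _ _ _ /(_ pL) [].
have [i0 /andP[i0L /eqP i0u] i0min] := ex_minnP Ex.
have below : forall i, i < i0 -> cu (tl i) <> white.
  move=> i Hi E; have := i0min i; rewrite E eqxx andbT.
  have -> : i <= L by lia.
  move=> /(_ isT); lia.
have above : forall i, i0 <= i -> i <= L -> cu (tl i) = white.
  move=> i Hi; rewrite -(subnKC Hi); elim: (i - i0) => [|d IH] H; first by rewrite addn0.
  have [_ _ Hu] := hori (ltac:(lia) : i0 + d < L).
  rewrite addnS; apply: Hu; apply: IH; lia.
have bord := borders below.
set a := i0 %/ N; set b := i0 %% N.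
have i0E : i0 = a * N + b by rewrite /a /b -divn_eq.
have bN : b < N by rewrite /b ltn_pmod.
have LaN : L < a * N + N.
  rewrite ltnNge; apply/negP => H.
  set z := a * N + N.-1.
  have zL : z <= L by rewrite /z; lia.
  have [_ Hr] := bord a N.-1 ltac:(lia) zL ltac:(rewrite /z; lia).
  have zr : cr (tl z) = white by apply/Hr.
  have zu : cu (tl z) = white by apply: above => //; rewrite /z; lia.
  have Hle := nw_le zL.
  have := named2 zL.
  have -> : nwhite white (tl z) = 2 by move: Hle; rewrite /nwhite zr zu eqxx; case: (_ == _); case: (_ == _).
  move=> /(_ erefl) Hn; have := Hn; move=> /(named_cases zL) [] [E [A B]].
  - by nwsolve Hle.
  - by nwsolve Hle.
  - by nwsolve Hle.
  - apply: (@noloop z (L - z)) => //; first by rewrite /z; lia.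
      by rewrite subnKC.
    by rewrite subnKC // pL E.
have LE : L = a * N + N.-1.
  set c := L %/ N; set e := L %% N.
  have LcE : L = c * N + e by rewrite /c /e -divn_eq.
  have eN : e < N by rewrite /e ltn_pmod.
  have [_ Hr] := bord c e eN ltac:(lia) ltac:(lia).
  have Lr : cr (tl L) = white by case: (tl_named (leqnn L)) => _ _ _ /(_ pL) [].
  rewrite -LcE in Hr; have eE := proj1 Hr Lr.
  have ca : c = a by nia.
  lia.
have b0 : b = 0.
  set c := P %/ N; set e := P %% N.
  have PcE : P = c * N + e by rewrite /c /e -divn_eq.
  have eN : e < N by rewrite /e ltn_pmod.
  have [Hl _] := bord c e eN ltac:(lia) ltac:(lia).
  have [Pl Pu] : cl (tl P) = white /\ cu (tl P) = white.
    by case: (tl_named (ltnW HPL)) => _ _ /(_ pP).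
  rewrite -PcE in Hl; have eE := proj1 Hl Pl.
  have Pi0 : i0 <= P by case: (ltnP P i0) => // /below.
  have ca : c = a by nia.
  lia.
rewrite b0 addn0 in i0E.
exists N, a.+1; split => //; split => //.
exists (fun x y => tl (y * N + x)); split; last split.
- move=> x y xN ya.
  have yN : y * N <= a * N by rewrite leq_mul2r ltnS in ya *; rewrite ya orbT.
  have iL : y * N + x <= L by lia.
  have [Hl Hr] := bord y x xN iL ltac:(lia).
  split.
  + exact: tl_T.
  + by split=> H; [exact: (proj2 Hl H) | exact: (proj1 Hl H)].
  + by split=> H; [exact: (proj2 Hr H) | exact: (proj1 Hr H)].
  + split=> [->|Hd]; first by rewrite mul0n add0n; case: (row0 xN).
    case: y ya yN iL Hl Hr Hd => // y ya yN iL Hl Hr Hd.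
    have E : y.+1 * N + x = (y * N + x) + N by rewrite mulSn; lia.
    rewrite E in iL Hd.
    have yN' : y.+1 * N <= a * N by [].
    have nb := below (y * N + x) ltac:(rewrite mulSn in yN'; lia).
    have [Hv _ _] := verti iL nb.
    by case: nb; rewrite Hv.
  + split=> [->|Hu]; first by apply: above => //; lia.
    have Hi : i0 <= y * N + x by case: (ltnP (y * N + x) i0) => // /below.
    suff : ~ (y < a) by rewrite /=; lia.
    move=> ya'; have : y.+1 * N <= a * N by rewrite leq_mul2r ya' orbT.
    rewrite mulSn; lia.
- move=> x y xN ya.
  have yN : y * N <= a * N by rewrite leq_mul2r ltnS in ya *; rewrite ya orbT.
  have [Hc _ _] := hori (ltac:(lia) : y * N + x < L).
  by rewrite addnS.
- move=> x y xN ya.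
  have yN : y.+1 * N <= a * N by rewrite leq_mul2r ltnS in ya *; rewrite ya orbT.
  rewrite mulSn in yN.
  have [Hv _ _] := verti (ltac:(lia) : (y * N + x) + N <= L) (below (y * N + x) ltac:(lia)).
  have -> : y.+1 * N + x = (y * N + x) + N by rewrite mulSn; lia.
  exact: Hv.
Qed.

End Main.

Theorem lemma4p4 (Col : finType) (T : {set tile Col}) (white : Col)
  (HT : at_most_two_white white T) :
  (exists (D : Type) (r : D -> D -> Prop) (C : tile Col -> D -> Prop)
          (ld rd lu ru : D),
     snake white r T C ld rd lu ru) ->
  solvable white T.
Proof.
move=> [D [r [C [ld [rd [lu [ru [[Hpath Hnoloop Huniq Hspec Hhori] [[N [[HN Hlen] _]] Hverti]]]]]]]]].
case: Hpath => k1 [k2 [k3 [[p1 p2 p3] [R1 R2 R3]]]].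
have [f1 [f10 f1k f1s]] := rpow_fun R1.
have [f2 [f20 f2k f2s]] := rpow_fun R2.
have [f3 [f30 f3k f3s]] := rpow_fun R3.
have [h [h0 hk hkm hs hle]] := cat_fun (etrans f1k (esym f20)) f1s f2s.
have hk' : h (k1 + k2) = f3 0 by rewrite hkm f2k f30.
have [g [g0 gk gkm gs gle]] := cat_fun hk' hs f3s.
apply: (@cover_main Col white T HT D r C ld rd lu ru g (k1 + k2 + k3) k1 (k1 + k2) N) => //.
- by rewrite g0 h0.
- by rewrite gle ?hk ?f1k //; lia.
- by rewrite gk hkm f2k.
- by rewrite gkm f3k.
all: lia.
Qed.
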